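(* Let $C\subseteq\mathbb{R}^d$ be a compact set with a system of balls $\{S_I\}_I$ for which there is $r\in(0,\tfrac13]$ such that $\tau(C,\{S_I\}_I)\ge\frac1{1-2r}$ and $\{S_I\}_I$ is $r$-uniformly dense. Then there is $a>0$, depending only on $r$ and $\operatorname{rad}(S_\emptyset)$, such that for every unit vector $v$, $[0,a]\subseteq\Delta_v(C)$.
   Context: $\mathbb{R}^d$ carries a distance $\operatorname{dist}$ induced by a norm; balls are closed. A system of balls for a compact set $C$ is a family $\{S_I\}_I$ of closed balls indexed by finite words with each $S_I$ containing its finitely many children $S_{I,j}$, $C=\bigcap_{n\ge0}\bigcup_{\ell(I)=n}S_I$, and radii tending to $0$ along every infinite branch. $h_I:=\max_{x\in S_I}\operatorname{dist}(x,C)$; thickness $\tau(C,\{S_I\}_I):=\inf_I\frac{\min_i\operatorname{rad}(S_{I,i})}{h_I}$. The system is $r$-uniformly dense if for every $I$ and every ball $B\subseteq S_I$ with $\operatorname{rad}(B)\ge r\operatorname{rad}(S_I)$ there is a child $S_{I,i}\subseteq B$. For a unit vector $v$, $\Delta_v(C)$ is the set of $t\in\mathbb{R}$ such that there are $e_1,e_2\in C$ with $e_1-e_2=tv$ (equivalently $C\cap(C+tv)\ne\emptyset$). *)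

(* Defs.v *)
(* R : realType, R^d = 'rV[R]_d. *)
From HB Require Import structures.
From mathcomp Require Import all_boot all_order all_algebra.
From mathcomp Require Import all_classical all_reals all_analysis.
Set Implicit Arguments. Unset Strict Implicit. Unset Printing Implicit Defensive.
Import Order.TTheory GRing.Theory Num.Theory numFieldNormedType.Exports.
Local Open Scope classical_set_scope.
Local Open Scope ring_scope.

Definition is_norm (R : realType) (d : nat) (N : 'rV[R]_d -> R) : Prop :=
  [/\ forall x y, N (x + y) <= N x + N y,
      forall (a : R) x, N (a *: x) = `|a| * N x
    & forall x, N x = 0 -> x = 0].

Definition cball (R : realType) (d : nat) (N : 'rV[R]_d -> R)
  (c : 'rV[R]_d) (rho : R) : set 'rV[R]_d := [set x | N (x - c) <= rho].

(* A ball is given by (center, radius); balls have positive radius. *)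
Definition ballset (R : realType) (d : nat) (N : 'rV[R]_d -> R)
  (B : 'rV[R]_d * R) : set 'rV[R]_d := cball N B.1 B.2.

(* Words of the tree: nch I = number of children of the node I;
   the children of I are the words rcons I j for j < nch I. *)
Inductive valid_word (nch : seq nat -> nat) : seq nat -> Prop :=
| valid_nil : valid_word nch [::]
| valid_rcons I j : valid_word nch I -> (j < nch I)%N -> valid_word nch (rcons I j).

Definition distC (R : realType) (d : nat) (N : 'rV[R]_d -> R)
  (C : set 'rV[R]_d) (x : 'rV[R]_d) : R := inf [set N (x - e) | e in C].

Definition hI (R : realType) (d : nat) (N : 'rV[R]_d -> R)
  (C : set 'rV[R]_d) (B : 'rV[R]_d * R) : R :=
  sup [set distC N C x | x in ballset N B].

Definition system_of_balls (R : realType) (d : nat) (N : 'rV[R]_d -> R)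
  (C : set 'rV[R]_d) (S : seq nat -> 'rV[R]_d * R) (nch : seq nat -> nat) : Prop :=
  [/\ (forall I, valid_word nch I -> 0 < (S I).2),
      (forall I j, valid_word nch I -> (j < nch I)%N ->
         ballset N (S (rcons I j)) `<=` ballset N (S I)),
      C = \bigcap_(n in [set: nat])
            \bigcup_(I in [set I | valid_word nch I /\ size I = n]) ballset N (S I)
    & (forall f : nat -> nat, (forall n, (f n < nch (mkseq f n))%N) ->
         (S (mkseq f n)).2 @[n --> \oo] --> (0 : R))].

(* tau(C, {S_I}) >= t, i.e. inf_I (min_i rad S_{I,i}) / h_I >= t,
   unfolded as: for every node I and child i, t * h_I <= rad S_{I,i}
   (ratios with h_I = 0 count as +oo, min over no children as +oo). *)
Definition thickness_ge (R : realType) (d : nat) (N : 'rV[R]_d -> R)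
  (C : set 'rV[R]_d) (S : seq nat -> 'rV[R]_d * R) (nch : seq nat -> nat) (t : R) : Prop :=
  forall I j, valid_word nch I -> (j < nch I)%N ->
    t * hI N C (S I) <= (S (rcons I j)).2.

Definition uniformly_dense (R : realType) (d : nat) (N : 'rV[R]_d -> R)
  (S : seq nat -> 'rV[R]_d * R) (nch : seq nat -> nat) (r : R) : Prop :=
  forall I (B : 'rV[R]_d * R), valid_word nch I -> 0 < B.2 ->
    ballset N B `<=` ballset N (S I) -> r * (S I).2 <= B.2 ->
    exists2 j, (j < nch I)%N & ballset N (S (rcons I j)) `<=` ballset N B.

Definition Delta (R : realType) (d : nat) (C : set 'rV[R]_d) (v : 'rV[R]_d) : set R :=
  [set t | exists e1 e2, [/\ C e1, C e2 & e1 - e2 = t *: v]].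

(* Main.v *)
Require Import Defs.
From HB Require Import structures.
From mathcomp Require Import all_boot all_order all_algebra.
From mathcomp Require Import all_classical all_reals all_analysis.
Import Order.TTheory GRing.Theory Num.Theory numFieldNormedType.Exports.
Local Open Scope classical_set_scope.
Local Open Scope ring_scope.

From mathcomp Require Import ring lra.
Set Implicit Arguments. Unset Strict Implicit. Unset Printing Implicit Defensive.

Lemma NT (R : realType) d (N : 'rV[R]_d -> R) : is_norm N -> forall x y, N (x + y) <= N x + N y.
Proof. by case. Qed.
Lemma NZ (R : realType) d (N : 'rV[R]_d -> R) : is_norm N -> forall (a : R) x, N (a *: x) = `|a| * N x.
Proof. by case. Qed.
Lemma ND (R : realType) d (N : 'rV[R]_d -> R) : is_norm N -> forall x, N x = 0 -> x = 0.
Proof. by case. Qed.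

Lemma N0 (R : realType) d (N : 'rV[R]_d -> R) : is_norm N -> N 0 = 0.
Proof. by case=> _ hZ _; have := hZ 0 0; rewrite scale0r normr0 mul0r. Qed.

Lemma NN (R : realType) d (N : 'rV[R]_d -> R) : is_norm N -> forall x, N (- x) = N x.
Proof. by case=> _ hZ _ x; rewrite -scaleN1r hZ normrN normr1 mul1r. Qed.

Lemma Nge0 (R : realType) d (N : 'rV[R]_d -> R) : is_norm N -> forall x, 0 <= N x.
Proof.
move=> hN x; have := NT hN x (- x); rewrite subrr (N0 hN) (NN hN) => h.
by rewrite -(@pmulr_rge0 _ 2) // mulr2n mulrDl !mul1r.
Qed.

Lemma NB (R : realType) d (N : 'rV[R]_d -> R) : is_norm N -> forall x y, N (x - y) = N (y - x).
Proof. by move=> hN x y; rewrite -(NN hN) opprB. Qed.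

Lemma Ntri (R : realType) d (N : 'rV[R]_d -> R) : is_norm N -> forall x y z,
  N (x - z) <= N (x - y) + N (y - z).
Proof. by move=> hN x y z; have := NT hN (x - y) (y - z); rewrite addrA subrK. Qed.

Lemma Nlip (R : realType) d (N : 'rV[R]_d -> R) : is_norm N -> forall x y,
  `|N x - N y| <= N (x - y).
Proof.
move=> hN x y; rewrite ler_norml.
have h1 := Ntri hN y x 0; have h2 := Ntri hN x y 0.
rewrite !subr0 (NB hN y x) in h1 h2.
apply/andP; split; lra.
Qed.

Lemma Nupper (R : realType) d (N : 'rV[R]_d -> R) : is_norm N ->
  exists2 K : R, 0 < K & forall x, N x <= K * `|x|.
Proof.
move=> hN; exists (1 + \sum_(i < d) N (delta_mx 0 i)).
  have hs : 0 <= \sum_(i < d) N (delta_mx 0 i) by apply: sumr_ge0 => i _; exact: Nge0.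
  lra.
move=> x; rewrite mulrDl mul1r.
suff : N x <= (\sum_(i < d) N (delta_mx 0 i)) * `|x| by have := normr_ge0 x; lra.
have hx : x = \sum_(i < d) x 0 i *: delta_mx 0 i.
  by rewrite {1}(matrix_sum_delta x) big_ord1.
rewrite {1}hx.
have H1 : N (\sum_(i < d) x 0 i *: delta_mx 0 i) <= \sum_(i < d) N (x 0 i *: delta_mx 0 i).
  elim/big_ind2: _ => //.
  - by rewrite (N0 hN).
  - move=> a b c e h1 h2; apply: le_trans (NT hN b e) _; exact: lerD.
apply: (le_trans H1); rewrite mulr_suml.
apply: ler_sum => i _; rewrite (NZ hN) mulrC; apply: ler_wpM2l; first exact: Nge0.
have -> : `|x| = mx_norm x by [].
rewrite mx_normrE; apply/bigmax_geP; right; exists (ord0, i) => //=.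
Qed.

Lemma Ncont (R : realType) d (N : 'rV[R]_d -> R) : is_norm N -> continuous N.
Proof.
move=> hN; have [K K0 hK] := Nupper hN => x.
apply/(@cvgrPdist_le _ _ _ (nbhs x) (nbhs_filter x)) => e e0 /=.
have eK : 0 < e / K by rewrite divr_gt0.
have := @cvgr_dist_le _ _ _ (nbhs x) (nbhs_filter x) id x (@cvg_id _ (nbhs x)) _ eK.
apply: filterS => y hy.
apply: le_trans (Nlip hN x y) _; apply: le_trans (hK _) _.
by rewrite mulrC -ler_pdivlMr.
Qed.

Lemma Nlower (R : realType) d (N : 'rV[R]_d -> R) : is_norm N ->
  forall u : 'rV[R]_d, u != 0 ->
  exists2 m : R, 0 < m & forall x, m * `|x| <= N x.
Proof.
move=> hN u u0.
pose S := [set x : 'rV[R]_d | `|x| <= 1] `&` [set x | 1 <= `|x|].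
have Sc : compact S.
  apply: bounded_closed_compact.
    exists 1; split; first by rewrite num_real.
    by move=> M M1 y [h _]; apply: le_trans h (ltW M1).
  apply: closedI.
    apply: (@preimage_closed _ _ (fun x : 'rV[R]_d => `|x|) [set y | y <= 1]).
      by move=> y _; exact: norm_continuous.
    exact: closed_le.
  apply: (@preimage_closed _ _ (fun x : 'rV[R]_d => `|x|) [set y | 1 <= y]).
    by move=> y _; exact: norm_continuous.
  exact: closed_ge.
have nu : `|u| != 0 by rewrite normr_eq0.
have S1 : forall x, x != 0 -> S (`|x|^-1 *: x).
  move=> x x0; have hx : `| `|x|^-1 *: x | = 1.
    by apply: normrZV; rewrite unitfE normr_eq0.
  by rewrite /S /=; rewrite hx lexx.
have Sne : S !=set0 by exists (`|u|^-1 *: u); exact: S1.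
have [x0 Sx0 hmin] := compact_EVT_min Sne Sc (@continuous_subspaceT _ _ S N (Ncont hN)).
have x0ne : x0 != 0.
  apply/eqP => h; move: Sx0; rewrite inE h => -[_ /=].
  by rewrite normr0 ler10.
have Nx0 : 0 < N x0.
  rewrite lt_neqAle Nge0 // andbT eq_sym; apply/eqP => h; move/eqP: x0ne; apply.
  exact: ND hN _ h.
exists (N x0) => // x.
have [->|x0'] := eqVneq x 0; first by rewrite normr0 mulr0 Nge0.
have hx : x = `|x| *: (`|x|^-1 *: x).
  by rewrite scalerA divff ?scale1r // normr_eq0.
rewrite {2}hx (NZ hN) normr_id mulrC; apply: ler_wpM2l; first exact: normr_ge0.
by apply: hmin; rewrite inE; apply: S1.
Qed.

Lemma ball_le (R : realType) d (N : 'rV[R]_d -> R) : is_norm N ->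
  forall u, N u = 1 -> forall a b s rho, 0 <= s ->
  cball N a s `<=` cball N b rho -> s <= rho.
Proof.
move=> hN u u1 a b s rho s0 sub.
have h1 : cball N b rho (a + s *: u).
  apply: sub; rewrite /cball /= addrAC subrr add0r (NZ hN) u1 mulr1 ger0_norm //.
have h2 : cball N b rho (a - s *: u).
  apply: sub; rewrite /cball /= addrAC subrr add0r (NN hN) (NZ hN) u1 mulr1 ger0_norm //.
rewrite /cball /= in h1 h2.
have := Ntri hN (a + s *: u) b (a - s *: u).
have -> : a + s *: u - (a - s *: u) = (s + s) *: u.
  by rewrite scalerDl opprB addrC addrA subrK.
rewrite (NZ hN) u1 mulr1 ger0_norm ?addr_ge0 // (NB hN b) => h.
lra.
Qed.

Lemma ball_sub (R : realType) d (N : 'rV[R]_d -> R) : is_norm N ->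
  forall a b s rho, N (a - b) + s <= rho -> cball N a s `<=` cball N b rho.
Proof.
move=> hN a b s rho h x; rewrite /cball /= => hx.
have := Ntri hN x a b; lra.
Qed.

Lemma ball_inter (R : realType) d (N : 'rV[R]_d -> R) : is_norm N ->
  forall z c s rho, 0 <= s -> N (z - c) <= rho -> s + s <= rho ->
  exists m, cball N m s `<=` cball N z (s + s) /\ cball N m s `<=` cball N c rho.
Proof.
move=> hN z c s rho s0 hz hs.
have [hD|hD] := lerP (N (c - z)) s.
  exists z; split; apply: ball_sub => //; rewrite ?subrr ?(N0 hN).
    lra.
  rewrite (NB hN); lra.
set D := N (c - z) in hD.
have D0 : 0 < D by lra.
exists (z + (s / D) *: (c - z)); split; apply: ball_sub => //.
  rewrite addrAC subrr add0r (NZ hN) ger0_norm ?divr_ge0 ?(ltW D0) //.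
  rewrite -/D mulrAC -mulrA divff ?mulr1; last by rewrite gt_eqF.
  lra.
have -> : z + (s / D) *: (c - z) - c = (1 - s / D) *: (z - c).
  by rewrite scalerBl scale1r -scalerN opprB addrAC.
have sD : s / D <= 1 by rewrite ler_pdivrMr // mul1r ltW.
rewrite (NZ hN) ger0_norm ?subr_ge0 // (NB hN) -/D mulrBl mul1r.
rewrite mulrAC -mulrA divff ?mulr1; last by rewrite gt_eqF.
rewrite (NB hN) -/D in hz; lra.
Qed.

Lemma vr_inv (nch : seq nat -> nat) I j :
  valid_word nch (rcons I j) -> valid_word nch I /\ (j < nch I)%N.
Proof.
move=> h; inversion h as [H|I0 j0 hv hj H].
  by move: H; case: (I) => [|? ?].
by case: (rcons_inj H) => <- <-.
Qed.

Lemma valid_cat (R : realType) d (N : 'rV[R]_d -> R) C S nch :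
  system_of_balls N C S nch -> forall s I, valid_word nch (I ++ s) ->
  valid_word nch I /\ ballset N (S (I ++ s)) `<=` ballset N (S I).
Proof.
case=> _ hsub _ _; elim/last_ind => [|s x IH] I.
  by rewrite cats0 => h; split.
rewrite -rcons_cat => /vr_inv [hv hx].
have [hI hs] := IH I hv; split => //.
apply: subset_trans hs; exact: hsub.
Qed.

Lemma rad_root (R : realType) d (N : 'rV[R]_d -> R) C S nch :
  is_norm N -> forall u, N u = 1 ->
  system_of_balls N C S nch -> forall I, valid_word nch I -> (S I).2 <= (S [::]).2.
Proof.
move=> hN u u1 hs I hI.
have [_ hsub] := valid_cat hs (s := I) (I := [::]) hI.
apply: (ball_le hN u1) hsub.
by case: hs => hpos _ _ _; apply: ltW; apply: hpos.
Qed.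

Lemma thick_h (R : realType) d (N : 'rV[R]_d -> R) C S nch (r : R) :
  0 < r -> r <= 3^-1 -> thickness_ge N C S nch (1 - 2 * r)^-1 ->
  forall I j, valid_word nch I -> (j < nch I)%N ->
  hI N C (S I) <= (1 - 2 * r) * (S (rcons I j)).2.
Proof.
move=> r0 r3 ht I j hI hj; have := ht I j hI hj.
have h12 : 0 < 1 - 2 * r by lra.
by rewrite -ler_pdivlMl ?invr_gt0 // invrK.
Qed.

Lemma lip_cont (R : realType) d (f : 'rV[R]_d -> R) (K : R) : 0 < K ->
  (forall x y, `|f x - f y| <= K * `|x - y|) -> continuous f.
Proof.
move=> K0 hK x.
apply/(@cvgrPdist_le _ _ _ (nbhs x) (nbhs_filter x)) => e e0 /=.
have eK : 0 < e / K by rewrite divr_gt0.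
have := @cvgr_dist_le _ _ _ (nbhs x) (nbhs_filter x) id x (@cvg_id _ (nbhs x)) _ eK.
apply: filterS => y hy.
apply: le_trans (hK _ _) _.
by rewrite mulrC -ler_pdivlMr.
Qed.

Lemma h_pt (R : realType) d (N : 'rV[R]_d -> R) (C : set 'rV[R]_d) :
  is_norm N -> compact C -> forall e0, C e0 ->
  forall B z, ballset N B z -> exists2 e, C e & N (z - e) <= hI N C B.
Proof.
move=> hN cC e0 Ce0 B z hz.
have hc : continuous (fun e : 'rV[R]_d => N (z - e)).
  have [K K0 hK] := Nupper hN.
  apply: (lip_cont K0) => x y.
  apply: le_trans (Nlip hN _ _) _.
  rewrite opprB addrC addrA subrK.
  by apply: le_trans (hK _) _; rewrite -normrN opprB.
have Cne : C !=set0 by exists e0.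
have [e1 Ce1 hmin] := compact_EVT_min Cne cC (@continuous_subspaceT _ _ C _ hc).
rewrite inE in Ce1; exists e1 => //.
have hlb : forall x, has_lbound [set N (x - e) | e in C].
  by move=> x; exists 0 => _ [e _ <-]; exact: Nge0.
have h1 : N (z - e1) <= distC N C z.
  apply: lb_le_inf; first by exists (N (z - e1)), e1.
  by move=> _ [e Ce <-]; apply: hmin; rewrite inE.
apply: le_trans h1 _.
have hdist : forall x, distC N C x <= N (x - e0).
  move=> x; apply: (ge_inf (hlb x)); by exists e0.
apply: ub_le_sup; last by exists z.
exists (B.2 + N (B.1 - e0)) => _ [x hx <-].
apply: le_trans (hdist x) _; apply: le_trans (Ntri hN x B.1 e0) _.
by rewrite lerD2r.
Qed.

Lemma has_child (R : realType) d (N : 'rV[R]_d -> R) C S nch (r : R) :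
  system_of_balls N C S nch -> r <= 1 -> 0 < r -> uniformly_dense N S nch r ->
  forall I (B : 'rV[R]_d * R), valid_word nch I -> 0 < B.2 ->
    ballset N B `<=` ballset N (S I) -> r * (S I).2 <= B.2 ->
    exists2 j, (j < nch I)%N & ballset N (S (rcons I j)) `<=` ballset N B.
Proof. by move=> _ _ _ hd; exact: hd. Qed.

Lemma branch_exists (nch : seq nat -> nat) (G : seq nat -> Prop) :
  G [::] -> (forall I, G I -> exists2 j, (j < nch I)%N & G (rcons I j)) ->
  exists f : nat -> nat,
    (forall n, (f n < nch (mkseq f n))%N) /\ (forall n, G (mkseq f n)).
Proof.
move=> G0 step.
have [ch hch] : {ch : seq nat -> nat &
    forall I, G I -> (ch I < nch I)%N /\ G (rcons I (ch I))}.
  apply: (@choice _ _ (fun I j => G I -> (j < nch I)%N /\ G (rcons I j))) => I.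
  case: (pselect (G I)) => [gI|ngI].
    by have [j hj gj] := step I gI; exists j.
  by exists 0%N.
pose g := fix g n := if n is k.+1 then rcons (g k) (ch (g k)) else [::].
have hg : forall n, G (g n) by elim => //= n IH; exact: (hch _ IH).2.
have hm : forall n, mkseq (fun k => ch (g k)) n = g n.
  by elim => // n IH; rewrite mkseqS IH.
exists (fun k => ch (g k)); split => n; rewrite hm //; exact: (hch _ (hg n)).1.
Qed.

Definition ext (R : realType) d (N : 'rV[R]_d -> R) (S : seq nat -> 'rV[R]_d * R)
  (nch : seq nat -> nat) (y : 'rV[R]_d) (J : seq nat) (n : nat) :=
  exists s, [/\ size s = n, valid_word nch (J ++ s) & ballset N (S (J ++ s)) y].

Lemma ext_mono (R : realType) d (N : 'rV[R]_d -> R) C S nch y J n n' :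
  system_of_balls N C S nch -> ext N S nch y J n' -> (n <= n')%N -> ext N S nch y J n.
Proof.
move=> hs [s [hsz hv hy]] hn.
have e : J ++ s = (J ++ take n s) ++ drop n s by rewrite -catA cat_take_drop.
rewrite e in hv hy.
have [hv' hsub] := valid_cat hs hv.
exists (take n s); split => //; last exact: hsub.
by rewrite size_takel // hsz.
Qed.

Lemma konig_step (R : realType) d (N : 'rV[R]_d -> R) C S nch y I :
  system_of_balls N C S nch -> (forall n, ext N S nch y I n) ->
  exists2 j, (j < nch I)%N & (forall n, ext N S nch y (rcons I j) n).
Proof.
move=> hs gI.
case: (pselect (exists2 j, (j < nch I)%N & (forall n, ext N S nch y (rcons I j) n))) => // hno.
exfalso.
have H : forall j, (j < nch I)%N -> exists n, ~ ext N S nch y (rcons I j) n.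
  move=> j hj; apply/existsNP => hall; apply: hno; by exists j.
have Hk : forall k, (k <= nch I)%N ->
    exists M, forall j, (j < k)%N -> ~ ext N S nch y (rcons I j) M.
  elim => [|k IH] hk; first by exists 0%N.
  have [M hM] := IH (ltnW hk); have [n hn] := H k hk.
  exists (maxn M n) => j; rewrite ltnS leq_eqVlt => /orP [/eqP ->|hj] he.
    by apply: hn; apply: ext_mono hs he _; exact: leq_maxr.
  by apply: (hM j hj); apply: ext_mono hs he _; exact: leq_maxl.
have [M hM] := Hk _ (leqnn _).
have [s [hsz hv hy]] := gI M.+1.
case: s hsz hv hy => // j0 s' [hsz'] hv hy.
rewrite -cat_rcons in hv hy.
have [hv0 _] := valid_cat hs hv; have [_ hj0] := vr_inv hv0.
by apply: (hM j0 hj0); exists s'.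
Qed.

Lemma chain (R : realType) d (N : 'rV[R]_d -> R) C S nch :
  system_of_balls N C S nch -> forall y, C y -> forall eps, 0 < eps -> eps < (S [::]).2 ->
  exists V j, [/\ valid_word nch V, (j < nch V)%N,
     ballset N (S (rcons V j)) y, eps < (S V).2 & (S (rcons V j)).2 <= eps].
Proof.
move=> hs y Cy eps eps0 eR.
have hs' := hs; case: hs' => hpos hsub hC hbr.
have g0 : forall n, ext N S nch y [::] n.
  move=> n; rewrite hC in Cy; have [I [hI hsz] hyI] := Cy n Logic.I.
  by exists I; split.
have [f [hf hG]] := branch_exists g0 (fun I gI => konig_step hs gI).
have hlim := hbr f hf.
have hex : exists n, (S (mkseq f n)).2 <= eps.
  have [n hn] := filter_ex (@cvgr_dist_le _ _ _ _ _ (fun n => (S (mkseq f n)).2) 0 hlim _ eps0).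
  exists n; rewrite sub0r normrN in hn; exact: le_trans (ler_norm _) hn.
case: (ex_minnP hex) => k hk hmin.
case: k hk hmin => [|k] hk hmin; first by move: hk; rewrite /=; lra.
have [s0 [hs0 hv0 _]] := hG k 0%N.
have [s1 [hs1 hv1 hy1]] := hG k.+1 0%N.
move/size0nil: hs0 => hs0; move/size0nil: hs1 => hs1.
rewrite hs0 cats0 in hv0; rewrite hs1 cats0 mkseqS in hv1 hy1.
rewrite mkseqS in hk.
exists (mkseq f k), (f k); split => //.
by rewrite ltNge; apply/negP => h; have := hmin k h; rewrite ltnn.
Qed.

Lemma ball_closed (R : realType) d (N : 'rV[R]_d -> R) : is_norm N ->
  forall c rho, closed (cball N c rho).
Proof.
move=> hN c rho.
have hc : continuous (fun x : 'rV[R]_d => N (x - c)).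
  have [K K0 hK] := Nupper hN.
  apply: (lip_cont K0) => x y.
  apply: le_trans (Nlip hN _ _) _.
  rewrite opprB addrA subrK.
  exact: hK.
apply: (@preimage_closed _ _ (fun x : 'rV[R]_d => N (x - c)) [set y | y <= rho]).
  by move=> x _; exact: hc.
exact: closed_le.
Qed.

Lemma ball_compact (R : realType) d (N : 'rV[R]_d -> R) : is_norm N ->
  forall u : 'rV[R]_d, u != 0 -> forall c rho, compact (cball N c rho).
Proof.
move=> hN u u0 c rho.
have [m m0 hm] := Nlower hN u0.
apply: bounded_closed_compact; last exact: ball_closed.
exists (`|c| + rho / m); split; first by rewrite num_real.
move=> M hM x; rewrite /cball /= => hx.
apply: le_trans (ltW hM).
have h1 : m * `|x - c| <= rho := le_trans (hm _) hx.
have h2 : `|x - c| <= rho / m by rewrite ler_pdivlMr // mulrC.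
have h3 : `|x| <= `|x - c| + `|c|.
  by have := ler_normD (x - c) c; rewrite subrK.
lra.
Qed.

Lemma C_nonempty (R : realType) d (N : 'rV[R]_d -> R) C S nch (r : R) :
  is_norm N -> forall u : 'rV[R]_d, u != 0 ->
  system_of_balls N C S nch -> 0 < r -> r <= 1 -> uniformly_dense N S nch r ->
  exists e, C e.
Proof.
move=> hN u u0 hs r0 r1 hd.
have hs' := hs; case: hs' => hpos hsub hC hbr.
have step : forall I, valid_word nch I ->
    exists2 j, (j < nch I)%N & valid_word nch (rcons I j).
  move=> I hI.
  have [j hj _] := hd I (S I) hI (hpos I hI) (fun x h => h) (ler_piMl (ltW (hpos I hI)) r1).
  by exists j => //; apply: valid_rcons.
have [f [hf hv]] := branch_exists (valid_nil nch) step.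
have nest : forall n k, ballset N (S (mkseq f (n + k)%N)) `<=` ballset N (S (mkseq f n)).
  move=> n; elim => [|k IH]; first by rewrite addn0 => x.
  rewrite addnS mkseqS; apply: subset_trans IH; exact: hsub.
pose c n := (S (mkseq f n)).1.
have hc : forall n, ballset N (S (mkseq f n)) (c n).
  move=> n; rewrite /ballset /cball /c /= subrr (N0 hN); exact: ltW (hpos _ (hv n)).
have K0 : compact (ballset N (S [::])) by exact: (ball_compact hN u0).
have FK : (c @ \oo) (ballset N (S [::])).
  exists 0%N => // n _; have := nest 0%N n; rewrite add0n; apply; exact: hc.
have [z [Kz clz]] := K0 _ _ FK.
have hz : forall n, ballset N (S (mkseq f n)) z.
  move=> n; rewrite clusterE in clz.
  have := clz (ballset N (S (mkseq f n))).
  rewrite -(closure_id _).1; last exact: ball_closed.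
  apply; exists n => // m /= hm.
  have := nest n (m - n)%N; rewrite subnKC //; apply; exact: hc.
exists z; rewrite hC => n _; exists (mkseq f n) => //; split => //; exact: size_mkseq.
Qed.

Definition Dst (R : realType) d (N : 'rV[R]_d -> R) (C : set 'rV[R]_d)
  (S : seq nat -> 'rV[R]_d * R) (nch : seq nat -> nat) (r t : R) (v : 'rV[R]_d)
  (P : seq nat) (y w : 'rV[R]_d) : Prop :=
  [/\ valid_word nch P, C y, (w = t *: v \/ w = - (t *: v))
    & N (y + w - (S P).1) <= (1 - 2 * r) * (S P).2].

Lemma vI1 (R : realType) d (a b w : 'rV[R]_d) : a + w - (b + w) = a - b.
Proof. by rewrite opprD addrACA subrr addr0. Qed.
Lemma vI2 (R : realType) d (x w c : 'rV[R]_d) : x + - w - c = - (c + w - x).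
Proof. by rewrite opprB opprD addrA addrAC. Qed.
Lemma vI3 (R : realType) d (y w c : 'rV[R]_d) : y + w - c = - (c - w - y).
Proof. by rewrite opprB opprB addrA. Qed.
Lemma vI4 (R : realType) d (p w c : 'rV[R]_d) : p - w - c = p - (c + w).
Proof. by rewrite opprD addrA addrAC. Qed.

Lemma Dstep (R : realType) d (N : 'rV[R]_d -> R) (C : set 'rV[R]_d)
  (S : seq nat -> 'rV[R]_d * R) (nch : seq nat -> nat) (r t : R) (v : 'rV[R]_d) :
  is_norm N -> N v = 1 -> compact C -> system_of_balls N C S nch ->
  0 < r -> r <= 3^-1 -> thickness_ge N C S nch (1 - 2 * r)^-1 ->
  uniformly_dense N S nch r ->
  forall P y w, Dst N C S nch r t v P y w ->
  exists P' y' w', Dst N C S nch r t v P' y' w' /\ (S P').2 <= (r * (S P).2) + (r * (S P).2).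
Proof.
move=> hN v1 cC hs r0 r3 ht hd P y w [hP Cy hw hD].
have hs' := hs; case: hs' => hpos hsub hC hbr.
set rho := (S P).2 in hD *; set c := (S P).1 in hD *.
set s := r * rho.
have rho0 : 0 < rho by exact: hpos.
have s0 : 0 < s by rewrite mulr_gt0.
have rhoR : rho <= (S [::]).2 by exact: (rad_root hN v1 hs).
have erho : (1 - 2 * r) * rho + (s + s) = rho by rewrite /s; ring.
have srho : s + s <= (2 / 3) * rho.
  rewrite /s -mulrDl; apply: ler_wpM2r; [exact: ltW | lra].
set z := y + w in hD.
have hBz : cball N z (s + s) `<=` ballset N (S P).
  apply: ball_sub => //; rewrite -/c -/rho; lra.
have eps0 : 0 < s + s by lra.
have epsR : s + s < (S [::]).2 by lra.
have [V [j [hV hj hy1 hVr hV1r]]] := chain hs Cy eps0 epsR.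
have hvV1 : valid_word nch (rcons V j) by apply: valid_rcons.
have hyV : ballset N (S V) y by apply: (hsub V j hV hj).
set rho1 := (S (rcons V j)).2 in hV1r *.
set c1 := (S (rcons V j)).1 in hy1 *.
have hthV := thick_h r0 r3 ht hV hj.
rewrite -/rho1 in hthV.
case: (lerP (hI N C (S P)) ((1 - 2 * r) * rho1)) => hcase.
-
  pose q := c1 + w.
  have hq : ballset N (S P) q.
    rewrite /ballset /cball /= -/c.
    apply: le_trans (Ntri hN q z c) _.
    have : N (q - z) <= rho1.
      by rewrite /q /z vI1 (NB hN); exact: hy1.
    rewrite /s in hV1r; lra.
  have [x Cx hx] := h_pt hN cC Cy hq.
  exists (rcons V j), x, (- w); split; last by rewrite -/rho1 /s; lra.
  split => //.
    by case: hw => ->; [right | left; rewrite opprK].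
  rewrite -/c1 vI2 (NN hN); apply: le_trans hx hcase.
-
  have hz : N (z - ((S V).1 + w)) <= (S V).2 by rewrite /z vI1; exact: hyV.
  have [m [hm1 hm2]] := ball_inter hN (ltW s0) hz (ltW hVr).
  have hmP : cball N m s `<=` ballset N (S P) := subset_trans hm1 hBz.
  have [j' hj' hP1] := hd P (m, s) hP s0 hmP (lexx _).
  have hvP1 : valid_word nch (rcons P j') by apply: valid_rcons.
  set c2 := (S (rcons P j')).1 in hP1 *.
  have hc2 : cball N m s c2.
    apply: hP1; rewrite /ballset /cball /= subrr (N0 hN); exact: ltW (hpos _ hvP1).
  have hc2V : ballset N (S V) (c2 - w).
    by rewrite /ballset /cball /= vI4; exact: hm2.
  have [y2 Cy2 hy2] := h_pt hN cC Cy hc2V.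
  have hthP := thick_h r0 r3 ht hP hj'.
  have hradP1 : (S (rcons P j')).2 <= s.
    apply: (ball_le hN v1) hP1; exact: ltW (hpos _ hvP1).
  exists (rcons P j'), y2, w; split; last by rewrite -/rho; lra.
  split => //.
  rewrite -/c2 vI3 (NN hN); lra.
Qed.

Lemma closed_diff (R : realType) d (N : 'rV[R]_d -> R) (C : set 'rV[R]_d) (t : R) (v : 'rV[R]_d) :
  is_norm N -> compact C -> C !=set0 ->
  (forall eps, 0 < eps -> exists e1 e2, [/\ C e1, C e2 & N (e1 - e2 - t *: v) <= eps]) ->
  exists e1 e2, [/\ C e1, C e2 & e1 - e2 = t *: v].
Proof.
move=> hN cC Cne happ.
pose h : 'rV[R]_d * 'rV[R]_d -> 'rV[R]_d :=
  ((fun p : 'rV[R]_d * 'rV[R]_d => p.1) - (fun p => p.2)) - (fun=> t *: v).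
have hc : continuous h.
  move=> p; apply: cvgB; last exact: cvg_cst.
  apply: cvgB; [exact: cvg_fst | exact: cvg_snd].
have gc : continuous (N \o h).
  move=> p; apply: continuous_comp; [exact: hc | exact: Ncont].
have Gc : compact (C `*` C) by exact: compact_setX.
have [e0 Ce0] := Cne.
have Gne : (C `*` C) !=set0 by exists (e0, e0).
have [p0 Gp0 hmin] := compact_EVT_min Gne Gc (@continuous_subspaceT _ _ _ _ gc).
rewrite inE in Gp0; case: Gp0 => C1 C2.
have hp0 : N (h p0) = 0.
  apply/eqP; rewrite eq_le Nge0 // andbT; apply/negP => /negP; rewrite -ltNge => hpos.
  have [e1 [e2 [Ce1 Ce2 he]]] := happ _ (divr_gt0 hpos (ltr0n _ 2)).
  have := hmin (e1, e2); rewrite inE => /(_ (conj Ce1 Ce2)) /=.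
  rewrite /h /= in he *; lra.
exists p0.1, p0.2; split => //.
by apply/eqP; rewrite -subr_eq0; apply/eqP; have := ND hN hp0.
Qed.

Unset Implicit Arguments. Set Strict Implicit.

Theorem corollary4p4 (R : realType) (d : nat) (N : 'rV[R]_d -> R) :
  is_norm N ->
  forall (r R0 : R), 0 < r -> r <= 3^-1 -> 0 < R0 ->
  exists2 a : R, 0 < a &
    forall (C : set 'rV[R]_d) (S : seq nat -> 'rV[R]_d * R) (nch : seq nat -> nat),
      compact C ->
      system_of_balls N C S nch ->
      (S [::]).2 = R0 ->
      thickness_ge N C S nch (1 - 2 * r)^-1 ->
      uniformly_dense N S nch r ->
      forall v : 'rV[R]_d, N v = 1 ->
        `[0, a] `<=` Delta C v.
Proof.
move=> hN r R0 r0 r3 R00.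
have h12 : 0 < 1 - 2 * r by lra.
exists ((1 - 2 * r) * (1 - r) * R0).
  by rewrite mulr_gt0 // mulr_gt0 //; lra.
move=> C S nch cC hs hR0 ht hd v v1 t.
rewrite /= in_itv /= => /andP [t0 ta].
have v0 : v != 0 by apply/eqP => h; move: v1; rewrite h (N0 hN); lra.
have r1 : r <= 1 by lra.
have [e0 Ce0] := C_nonempty hN v0 hs r0 r1 hd.
have hs' := hs; case: hs' => hpos hsub hC hbr.
set c0 := (S [::]).1.
have hc0 : ballset N (S [::]) c0 by rewrite /ballset /cball /= subrr (N0 hN) hR0 ltW.
have [y Cy hy] := h_pt hN cC Ce0 hc0.
have rR0 : 0 < r * R0 by rewrite mulr_gt0.
have hB0 : cball N c0 (r * R0) `<=` ballset N (S [::]).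
  apply: ball_sub => //; rewrite subrr (N0 hN) hR0; nra.
have hle : r * (S [::]).2 <= r * R0 by rewrite hR0.
have [j hj hch] := hd [::] (c0, r * R0) (valid_nil nch) rR0 hB0 hle.
have hvj : valid_word nch (rcons [::] j) by apply: valid_rcons => //; exact: valid_nil.
have hrj : (S (rcons [::] j)).2 <= r * R0.
  apply: (ball_le hN v1) hch; exact: ltW (hpos _ hvj).
have hth0 := thick_h r0 r3 ht (valid_nil nch) hj.
have Dinit : Dst N C S nch r t v [::] y (t *: v).
  split; [exact: valid_nil | done | by left | ].
  rewrite -/c0 hR0.
  have -> : y + t *: v - c0 = - (c0 - y) + t *: v by rewrite opprB addrAC.
  apply: le_trans (NT hN _ _) _.
  rewrite (NN hN) (NZ hN) v1 mulr1 ger0_norm //.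
  have : (1 - 2 * r) * (S (rcons [::] j)).2 <= (1 - 2 * r) * (r * R0).
    by apply: ler_wpM2l; [exact: ltW | exact: hrj].
  move: ta; nra.
have iter : forall k, exists P y w, Dst N C S nch r t v P y w /\ (S P).2 <= (r + r) ^+ k * R0.
  elim => [|k [P [y' [w [hD hk]]]]].
    by exists [::], y, (t *: v); split => //; rewrite expr0 mul1r hR0.
  have [P' [y2 [w2 [hD' hr']]]] := Dstep hN v1 cC hs r0 r3 ht hd hD.
  exists P', y2, w2; split => //; apply: le_trans hr' _.
  rewrite exprS -mulrA -mulrDl; apply: ler_wpM2l; first lra.
  exact: hk.
have happ : forall eps, 0 < eps ->
    exists e1 e2, [/\ C e1, C e2 & N (e1 - e2 - t *: v) <= eps].
  move=> eps eps0.
  have q1 : `|r + r| < 1 by rewrite ger0_norm; lra.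
  have eR : 0 < eps / R0 by rewrite divr_gt0.
  have [k hk] := filter_ex (@cvgr_dist_le _ _ _ _ _ _ 0 (cvg_expr q1) _ eR).
  rewrite sub0r normrN /= in hk.
  have hk' : (r + r) ^+ k * R0 <= eps.
    by rewrite -ler_pdivlMr //; exact: le_trans (ler_norm _) hk.
  have [P [y' [w [[hP Cy' hw hD] hrad]]]] := iter k.
  have hq : ballset N (S P) (y' + w).
    rewrite /ballset /cball /=; apply: le_trans hD _.
    have := hpos _ hP; nra.
  have [e Ce he] := h_pt hN cC Ce0 hq.
  have [j' hj' hch'] := hd P (S P) hP (hpos _ hP) (fun x h => h)
    (ler_piMl (ltW (hpos _ hP)) r1).
  have hvj' : valid_word nch (rcons P j') by apply: valid_rcons.
  have hrj' : (S (rcons P j')).2 <= (S P).2.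
    apply: (ball_le hN v1) hch'; exact: ltW (hpos _ hvj').
  have hth := thick_h r0 r3 ht hP hj'.
  have hpos' := hpos _ hvj'.
  have hfin : N (y' + w - e) <= eps.
    apply: le_trans he _; apply: le_trans hth _; nra.
  case: hw => hw; rewrite hw in hfin.
    exists e, y'; split => //.
    have -> : e - y' - t *: v = - (y' + t *: v - e) by rewrite opprB opprD addrA.
    by rewrite (NN hN).
  exists y', e; split => //.
  by rewrite addrAC.
have [e1 [e2 [C1 C2 he]]] := closed_diff hN cC (ex_intro _ e0 Ce0) happ.
by exists e1, e2.
Qed.
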